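(* Under the setup and conditions of the context, DDD-PCT and no anticipation, for every $j\in\mathcal E$ (including $j<0$) the population coefficient $\alpha_j$ of the regression $Y_{i,t}=\alpha_i+\delta_{S_i,t}+\eta_{Q_i,t}+\sum_{e\in\mathcal E}\alpha_eR_e(i,t)+\varepsilon_{i,t}$ satisfies $$\alpha_j=\sum_{g\in\mathcal G_{\mathrm{trg}}}\sum_{\ell=0}^{K}\omega^{j,\star}_{g,\ell}\,\mathrm{CATT}(g,\ell).$$
   Context: Setup: balanced panel of units $i$ over $t\in\{1,\dots,T\}$; treatment-enabling group $S_i\in\mathcal S\subseteq\{2,\dots,T\}\cup\{\infty\}$; time-invariant eligibility $Q_i\in\{0,1\}$; $\mathcal G_{\mathrm{trg}}=\mathcal S\setminus\{\infty\}$. Potential outcomes $Y_{i,t}(g)$, $g\in\mathcal G_{\mathrm{trg}}$, and $Y_{i,t}(\infty)$; observed $Y_{i,t}=Y_{i,t}(g)$ if $S_i=g\in\mathcal G_{\mathrm{trg}}$ and $Q_i=1$, else $Y_{i,t}=Y_{i,t}(\infty)$. Data i.i.d. with finite second moments. $\mathrm{CATT}(g,e)=\mathbb E[Y_{i,g+e}(g)-Y_{i,g+e}(\infty)\mid S_i=g,Q_i=1]$. $\mathcal E=\{-L,\dots,K\}\setminus\{-1\}$; the window covers all event times. $R_e(i,t)=\mathbb 1\{t-S_i=e\}Q_i$, $R_{g,\ell}(i,t)=\mathbb 1\{S_i=g,Q_i=1,t=g+\ell\}$; population least-squares coefficients over units and periods; the Gram matrix of the three-way demeaned (unit, group-by-time,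 eligibility-by-time) event-time indicators is nonsingular. $\omega^{j,\star}_{g,\ell}$: coefficient on $R_j$ in the population regression of $R_{g,\ell}$ on $\alpha_i,\delta_{S_i,t},\eta_{Q_i,t},\{R_e\}_{e\in\mathcal E}$. No anticipation: $Y_{i,t}(g)=Y_{i,t}(\infty)$ a.s. for all $g\in\mathcal G_{\mathrm{trg}}$, $t<g$. DDD-PCT: for all $g\in\mathcal G_{\mathrm{trg}}$, $g_c\in\mathcal S$ with $g_c>g$, $t\in\{2,\dots,T\}$ with $t\le g_c$: $\Delta_t(g,1)-\Delta_t(g,0)=\Delta_t(g_c,1)-\Delta_t(g_c,0)$, where $\Delta_t(s,q)=\mathbb E[Y_{i,t}(\infty)-Y_{i,t-1}(\infty)\mid S_i=s,Q_i=q]$. *)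

(* Defs.v *)
From HB Require Import structures.
From mathcomp Require Import all_boot all_order all_algebra.
From mathcomp Require Import all_classical all_reals all_analysis.

Set Implicit Arguments.
Unset Strict Implicit.
Unset Printing Implicit Defensive.

Import Order.TTheory GRing.Theory Num.Theory.
Local Open Scope classical_set_scope.
Local Open Scope ring_scope.

(* Groups: [Some g] is the treatment-enabling period g, [None] is "infinity"
   (never enabled). Periods are natural numbers t, relevant for 1 <= t <= T.
   Eligibility Q is a boolean (true = 1). Potential outcomes
   [Y s t x] = Y_{i,t}(s) for the unit realised at sample point x. *)

Section DDD.
Variables (R : realType) (d : measure_display) (Omega : measurableType d).
Variable (P : probability Omega R).

Definition Yobs (Y : option nat -> nat -> Omega -> R) (S : Omega -> option nat)
  (Q : Omega -> bool) (t : nat) (x : Omega) : R :=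
  match S x with
  | Some g => if Q x then Y (Some g) t x else Y None t x
  | None => Y None t x
  end.

(* Event-time window  E = {-L, ..., K} \ {-1}, as a duplicate-free sequence *)
Definition Eseq (L K : nat) : seq int :=
  [seq e <- [seq (k%:Z - L%:Z) | k <- iota 0 (L + K).+1] | e != -1].

Definition Gtrg (Sset : seq (option nat)) : seq nat := undup (pmap id Sset).

Definition Rind (S : Omega -> option nat) (Q : Omega -> bool) (e : int)
  (t : nat) (x : Omega) : R :=
  match S x with
  | Some g => if Q x && (t%:Z - g%:Z == e) then 1 else 0
  | None => 0
  end.

Definition Rgl (S : Omega -> option nat) (Q : Omega -> bool) (g l : nat)
  (t : nat) (x : Omega) : R :=
  if (S x == Some g) && Q x && (t == g + l)%N then 1 else 0.

Definition fitval (L K : nat) (S : Omega -> option nat) (Q : Omega -> bool)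
  (a : Omega -> R) (dl : option nat -> nat -> R) (et : bool -> nat -> R)
  (al : int -> R) (t : nat) (x : Omega) : R :=
  a x + dl (S x) t + et (Q x) t + \sum_(e <- Eseq L K) al e * Rind S Q e t x.

Definition lsloss (T L K : nat) (S : Omega -> option nat) (Q : Omega -> bool)
  (Z : nat -> Omega -> R)
  (a : Omega -> R) (dl : option nat -> nat -> R) (et : bool -> nat -> R)
  (al : int -> R) : \bar R :=
  (\int[P]_x (\sum_(1 <= t < T.+1) (Z t x - fitval L K S Q a dl et al t x) ^+ 2)%:E)%E.

Definition ols_coef (T L K : nat) (S : Omega -> option nat) (Q : Omega -> bool)
  (Z : nat -> Omega -> R) (al : int -> R) : Prop :=
  exists (a : Omega -> R) (dl : option nat -> nat -> R) (et : bool -> nat -> R),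
    measurable_fun setT a /\
    forall (a' : Omega -> R) (dl' : option nat -> nat -> R) (et' : bool -> nat -> R)
           (al' : int -> R),
      measurable_fun setT a' ->
      (lsloss T L K S Q Z a dl et al <= lsloss T L K S Q Z a' dl' et' al')%E.

Definition fe_proj (T L K : nat) (S : Omega -> option nat) (Q : Omega -> bool)
  (Z : nat -> Omega -> R)
  (a : Omega -> R) (dl : option nat -> nat -> R) (et : bool -> nat -> R) : Prop :=
  measurable_fun setT a /\
  forall (a' : Omega -> R) (dl' : option nat -> nat -> R) (et' : bool -> nat -> R),
    measurable_fun setT a' ->
    (lsloss T L K S Q Z a dl et (fun _ => 0%R) <= lsloss T L K S Q Z a' dl' et' (fun _ => 0%R))%E.

Definition Rdm (L K : nat) (S : Omega -> option nat) (Q : Omega -> bool) (e : int)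
  (a : Omega -> R) (dl : option nat -> nat -> R) (et : bool -> nat -> R)
  (t : nat) (x : Omega) : R :=
  Rind S Q e t x - fitval L K S Q a dl et (fun _ => 0%R) t x.

Definition gram (T L K : nat) (S : Omega -> option nat) (Q : Omega -> bool)
  (A : int -> Omega -> R) (D : int -> option nat -> nat -> R) (H : int -> bool -> nat -> R)
  : 'M[R]_(size (Eseq L K)) :=
  \matrix_(i, j)
    let e := nth 0 (Eseq L K) i in
    let e' := nth 0 (Eseq L K) j in
    fine (\int[P]_x (\sum_(1 <= t < T.+1)
            Rdm L K S Q e (A e) (D e) (H e) t x * Rdm L K S Q e' (A e') (D e') (H e') t x)%:E)%E.

Definition cmean (X : Omega -> R) (A : set Omega) : R :=
  fine (\int[P]_(x in A) (X x)%:E)%E / fine (P A).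

Definition CATT (Y : option nat -> nat -> Omega -> R) (S : Omega -> option nat)
  (Q : Omega -> bool) (g l : nat) : R :=
  cmean (fun x => Y (Some g) (g + l)%N x - Y None (g + l)%N x)
        [set x | S x = Some g /\ Q x = true].

Definition Delta (Y : option nat -> nat -> Omega -> R) (S : Omega -> option nat)
  (Q : Omega -> bool) (t : nat) (s : option nat) (q : bool) : R :=
  cmean (fun x => Y None t x - Y None t.-1 x) [set x | S x = s /\ Q x = q].

End DDD.

Definition grp_gt (gc : option nat) (g : nat) : bool :=
  if gc is Some c then (g < c)%N else true.
Definition time_le (t : nat) (gc : option nat) : bool :=
  if gc is Some c then (t <= c)%N else true.

Arguments Rind {R d Omega}.
Arguments Rgl {R d Omega}.

(* Main.v *)
Require Import Defs.
From HB Require Import structures.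
From mathcomp Require Import all_boot all_order all_algebra.
From mathcomp Require Import all_classical all_reals all_analysis.
From mathcomp.algebra_tactics Require Import ring lra.
From mathcomp Require Import zify.
Set Implicit Arguments.
Unset Strict Implicit.
Unset Printing Implicit Defensive.
Import Order.TTheory GRing.Theory Num.Theory.
Local Open Scope classical_set_scope.
Local Open Scope ring_scope.

Module H1.

Section L2.
Variables (R : realType) (d : measure_display) (Omega : measurableType d).
Variable (P : probability Omega R).

Definition sqi (f : Omega -> R) :=
  measurable_fun setT f /\ P.-integrable setT (fun x => (f x ^+ 2)%:E).

Lemma int_cst (k : R) : P.-integrable setT (EFin \o (fun _ : Omega => k)).
Proof. exact: (finite_measure_integrable_cst P k measurableT). Qed.

Lemma int_le (f g : Omega -> R) : measurable_fun setT f ->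
  (forall x, `|f x| <= g x) -> P.-integrable setT (EFin \o g) ->
  P.-integrable setT (EFin \o f).
Proof.
move=> mf fg ig; apply: (le_integrable measurableT _ _ ig).
  by apply/measurable_realfun.measurable_EFinP.
move=> x _ /=; rewrite lee_fin; apply: (le_trans (fg x)).
by rewrite ger0_norm // (le_trans _ (fg x)).
Qed.

Lemma int_add (f g : Omega -> R) : P.-integrable setT (EFin \o f) ->
  P.-integrable setT (EFin \o g) -> P.-integrable setT (EFin \o (fun x => f x + g x)).
Proof.
move=> hf hg; apply: (eq_integrable measurableT _ _ _ (integrableD measurableT hf hg)).
by move=> x _ /=; rewrite EFinD.
Qed.

Lemma int_scale (k : R) (f : Omega -> R) : P.-integrable setT (EFin \o f) ->
  P.-integrable setT (EFin \o (fun x => k * f x)).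
Proof.
move=> hf; apply: (eq_integrable measurableT _ _ _ (integrableZl measurableT k hf)).
by move=> x _ /=; rewrite EFinM.
Qed.

Lemma int_opp (f : Omega -> R) : P.-integrable setT (EFin \o f) ->
  P.-integrable setT (EFin \o (fun x => - f x)).
Proof.
move=> hf; apply: (eq_integrable measurableT _ _ _ (int_scale (-1) hf)).
by move=> x _ /=; rewrite mulN1r.
Qed.

Lemma int_sub (f g : Omega -> R) : P.-integrable setT (EFin \o f) ->
  P.-integrable setT (EFin \o g) -> P.-integrable setT (EFin \o (fun x => f x - g x)).
Proof. by move=> hf hg; apply: int_add => //; apply: int_opp. Qed.

Lemma int_sum (I : Type) (s : seq I) (f : I -> Omega -> R) :
  (forall i, P.-integrable setT (EFin \o f i)) ->
  P.-integrable setT (EFin \o (fun x => \sum_(i <- s) f i x)).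
Proof.
move=> hf; elim: s => [|i s IH].
  apply: (eq_integrable measurableT _ _ _ (int_cst 0)).
  by move=> x _ /=; rewrite big_nil.
apply: (eq_integrable measurableT _ _ _ (int_add (hf i) IH)).
by move=> x _ /=; rewrite big_cons.
Qed.

Lemma sqi_meas f : sqi f -> measurable_fun setT f.
Proof. by case. Qed.

Lemma sq_int f : sqi f -> P.-integrable setT (EFin \o (fun x => f x ^+ 2)).
Proof. by case. Qed.

Lemma absmul_le (a b : R) : `|a * b| <= a ^+ 2 + b ^+ 2.
Proof.
rewrite normrM -(real_normK (num_real a)) -(real_normK (num_real b)).
have ha := normr_ge0 a; have hb := normr_ge0 b.
set u := `|a|; set v := `|b|; nra.
Qed.

Lemma sqi_mulI f g : sqi f -> sqi g ->
  P.-integrable setT (EFin \o (fun x => f x * g x)).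
Proof.
move=> hf hg; apply: (int_le (g := fun x => f x ^+ 2 + g x ^+ 2)).
- by apply: measurable_realfun.measurable_funM; apply: sqi_meas.
- by move=> x; apply: absmul_le.
- by apply: int_add; apply: sq_int.
Qed.

Lemma sqi_int f : sqi f -> P.-integrable setT (EFin \o f).
Proof.
move=> hf; apply: (int_le (g := fun x => f x ^+ 2 + 1)).
- exact: sqi_meas.
- move=> x; have := absmul_le (f x) 1; by rewrite mulr1 expr1n.
- by apply: int_add; [apply: sq_int | apply: int_cst].
Qed.

Lemma sqi_bnd (h : Omega -> R) (M : R) : measurable_fun setT h ->
  (forall x, `|h x| <= M) -> sqi h.
Proof.
move=> mh hM; split => //.
apply: (int_le (g := fun _ => M ^+ 2)).
- exact: measurable_realfun.measurable_funX.
- move=> x; rewrite normrX; apply: lerXn2r; rewrite ?nnegrE //.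
  exact: (le_trans (normr_ge0 _) (hM x)).
- exact: int_cst.
Qed.

Lemma sqi_add f g : sqi f -> sqi g -> sqi (fun x => f x + g x).
Proof.
move=> hf hg; split; first by apply: measurable_realfun.measurable_funD; apply: sqi_meas.
apply: (int_le (g := fun x => (f x ^+ 2 + g x ^+ 2) + (f x * g x + f x * g x))).
- by apply: measurable_realfun.measurable_funX; apply: measurable_realfun.measurable_funD; apply: sqi_meas.
- by move=> x; rewrite ger0_norm ?sqr_ge0 //; nra.
- apply: int_add; first by apply: int_add; apply: sq_int.
  by apply: int_add; apply: sqi_mulI.
Qed.

Lemma sqi_scale k f : sqi f -> sqi (fun x => k * f x).
Proof.
move=> hf; split; first by apply: measurable_realfun.measurable_funM => //; apply: sqi_meas.
apply: (eq_integrable measurableT _ _ _ (int_scale (k ^+ 2) (sq_int hf))).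
by move=> x _ /=; rewrite exprMn.
Qed.

Lemma sqi_opp f : sqi f -> sqi (fun x => - f x).
Proof.
move=> hf; have := sqi_scale (-1) hf; case=> m i; split.
  by apply: (eq_measurable_fun _ _ m) => x _; rewrite mulN1r.
by apply: (eq_integrable measurableT _ _ _ i) => x _ /=; rewrite mulN1r.
Qed.

Lemma sqi_sub f g : sqi f -> sqi g -> sqi (fun x => f x - g x).
Proof. by move=> hf hg; apply: sqi_add => //; apply: sqi_opp. Qed.

Lemma sqi_cst k : sqi (fun _ => k).
Proof. by apply: (sqi_bnd (M := `|k|)). Qed.

Lemma sqi_sum (I : Type) (s : seq I) (f : I -> Omega -> R) :
  (forall i, sqi (f i)) -> sqi (fun x => \sum_(i <- s) f i x).
Proof.
move=> hf; elim: s => [|i s IH].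
  have := sqi_cst 0; case=> m i; split.
    by apply: (eq_measurable_fun _ _ m) => x _; rewrite big_nil.
  by apply: (eq_integrable measurableT _ _ _ i) => x _ /=; rewrite big_nil.
have := sqi_add (hf i) IH; case=> m i'; split.
  by apply: (eq_measurable_fun _ _ m) => x _; rewrite big_cons.
by apply: (eq_integrable measurableT _ _ _ i') => x _ /=; rewrite big_cons.
Qed.

Lemma sqi_bmul (h f : Omega -> R) (M : R) : measurable_fun setT h ->
  (forall x, `|h x| <= M) -> sqi f -> sqi (fun x => h x * f x).
Proof.
move=> mh hM hf; split; first by apply: measurable_realfun.measurable_funM => //; apply: sqi_meas.
apply: (int_le (g := fun x => M ^+ 2 * f x ^+ 2)).
- by apply: measurable_realfun.measurable_funX; apply: measurable_realfun.measurable_funM => //; apply: sqi_meas.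
- move=> x; rewrite ger0_norm ?sqr_ge0 // exprMn.
  apply: ler_wpM2r; first exact: sqr_ge0.
  rewrite -(real_normK (num_real (h x))); apply: lerXn2r; rewrite ?nnegrE //.
  exact: (le_trans (normr_ge0 _) (hM x)).
- exact: int_scale (sq_int hf).
Qed.

Lemma sqi_sum_in (I : eqType) (s : seq I) (f : I -> Omega -> R) :
  (forall i, i \in s -> sqi (f i)) -> sqi (fun x => \sum_(i <- s) f i x).
Proof.
elim: s => [|i s IH] hf.
  have := sqi_cst 0; case=> m i; split.
    by apply: (eq_measurable_fun _ _ m) => x _; rewrite big_nil.
  by apply: (eq_integrable measurableT _ _ _ i) => x _ /=; rewrite big_nil.
have hi : sqi (f i) by apply: hf; rewrite mem_head.
have hs : sqi (fun x => \sum_(i <- s) f i x).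
  by apply: IH => j js; apply: hf; rewrite in_cons js orbT.
have := sqi_add hi hs; case=> m i'; split.
  by apply: (eq_measurable_fun _ _ m) => x _; rewrite big_cons.
by apply: (eq_integrable measurableT _ _ _ i') => x _ /=; rewrite big_cons.
Qed.

End L2.

End H1.
Import H1.

Module H2.

Lemma sum_delta (R : realType) (I : eqType) (r : seq I) (y : I) (F : I -> R) :
  uniq r -> y \in r -> \sum_(s <- r) F s * (s == y)%:R = F y.
Proof.
elim: r => [//|a r IH] /= /andP[anr ur]; rewrite in_cons big_cons.
case: (eqVneq a y) => [<- _ | ay /= yr].
  rewrite mulr1 big1_seq ?addr0 // => s /andP[_ sr].
  by case: (eqVneq s a) => [sa|]; [move: anr; rewrite -sa sr | rewrite mulr0].
by rewrite mulr0 add0r IH.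
Qed.

Section Panel.
Variables (R : realType) (d : measure_display) (Omega : measurableType d).
Variable (P : probability Omega R).
Variables (T : nat) (Sset : seq (option nat)) (S : Omega -> option nat) (Q : Omega -> bool).
Hypothesis HS : forall x, S x \in Sset.
Hypothesis HSm : forall s, measurable (S @^-1` [set s]).
Hypothesis HQm : measurable (Q @^-1` [set true]).

Definition cell (s : option nat) (q : bool) := [set x | S x = s /\ Q x = q].

Lemma cell_meas s q : measurable (cell s q).
Proof.
have -> : cell s q = S @^-1` [set s] `&` Q @^-1` [set q].
  by apply/seteqP; split => x /=.
apply: measurableI => //; case: q => //.
have -> : Q @^-1` [set false] = ~` (Q @^-1` [set true]).
  apply/seteqP; split => x /=; first by move=> ->.
  by case: (Q x).
exact: measurableC.
Qed.

Lemma indic_cell s q x : \1_(cell s q) x = ((S x == s) && (Q x == q))%:R :> R.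
Proof.
rewrite indicE; case: (boolP ((S x == s) && (Q x == q))) => [/andP[/eqP e1 /eqP e2] | hn].
  by rewrite mem_set.
by rewrite memNset // => -[e1 e2]; move: hn; rewrite e1 e2 !eqxx.
Qed.

Definition cells := [seq (s, q) | s <- undup Sset, q <- [:: true; false]].

Lemma SQdecomp (h : option nat -> bool -> R) x :
  h (S x) (Q x) = \sum_(sq <- cells) h sq.1 sq.2 * \1_(cell sq.1 sq.2) x.
Proof.
rewrite /cells big_allpairs_dep /=.
under eq_bigr => s _.
  rewrite big_cons big_cons big_nil addr0 !indic_cell.
  over.
have -> : h (S x) (Q x) = \sum_(s <- undup Sset) (h s (Q x)) * (s == S x)%:R.
  by rewrite sum_delta ?undup_uniq // mem_undup.
apply: eq_bigr => s _; rewrite (eq_sym s); case: (S x == s); case: (Q x); rewrite /= ?mulr0 ?mulr1 ?addr0 ?add0r //.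
Qed.

Lemma meas_SQ (h : option nat -> bool -> R) :
  measurable_fun setT (fun x => h (S x) (Q x)).
Proof.
apply: (eq_measurable_fun (fun x => \sum_(sq <- cells) h sq.1 sq.2 * \1_(cell sq.1 sq.2) x)).
  by move=> x _; rewrite SQdecomp.
apply: measurable_sum => sq; apply: measurable_realfun.measurable_funM => //.
exact/measurable_realfun.measurable_indic/cell_meas.
Qed.

Lemma sqi_SQ (h : option nat -> bool -> R) : sqi P (fun x => h (S x) (Q x)).
Proof.
have -> : (fun x => h (S x) (Q x)) =
          (fun x => \sum_(sq <- cells) h sq.1 sq.2 * \1_(cell sq.1 sq.2) x).
  by apply/funext => x; rewrite SQdecomp.
apply: sqi_sum => sq; apply: sqi_scale; apply: (sqi_bnd P (M := 1)).
  exact/measurable_realfun.measurable_indic/cell_meas.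
by move=> x; rewrite indicE; case: (_ \in _); rewrite ?normr1 ?normr0.
Qed.

Lemma sqi_SQmul (h : option nat -> bool -> R) f : sqi P f ->
  sqi P (fun x => h (S x) (Q x) * f x).
Proof.
move=> hf.
have -> : (fun x => h (S x) (Q x) * f x) =
          (fun x => \sum_(sq <- cells) h sq.1 sq.2 * (\1_(cell sq.1 sq.2) x * f x)).
  apply/funext => x; rewrite SQdecomp mulr_suml; apply: eq_bigr => i _.
  by rewrite mulrA.
apply: sqi_sum => sq; apply: sqi_scale; apply: (sqi_bmul (M := 1)) => //.
  exact/measurable_realfun.measurable_indic/cell_meas.
by move=> x; rewrite indicE; case: (_ \in _); rewrite ?normr1 ?normr0.
Qed.

Notation Rint f := (\int[P]_x f x).

Lemma RintD (f g : Omega -> R) : P.-integrable setT (EFin \o f) ->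
  P.-integrable setT (EFin \o g) -> Rint (fun x => f x + g x) = Rint f + Rint g.
Proof. by move=> hf hg; rewrite RintegralD. Qed.

Lemma RintZ (k : R) (f : Omega -> R) : P.-integrable setT (EFin \o f) ->
  Rint (fun x => k * f x) = k * Rint f.
Proof. by move=> hf; rewrite RintegralZl. Qed.

Lemma Rint_sum (I : Type) (s : seq I) (f : I -> Omega -> R) :
  (forall i, P.-integrable setT (EFin \o f i)) ->
  Rint (fun x => \sum_(i <- s) f i x) = \sum_(i <- s) Rint (f i).
Proof.
move=> hf; elim: s => [|i s IH].
  rewrite big_nil; under eq_Rintegral do rewrite big_nil.
  by rewrite Rintegral_cst // mul0r.
rewrite big_cons -IH; under eq_Rintegral do rewrite big_cons.
by rewrite RintD //; apply: int_sum.
Qed.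

Lemma Rint_SQmul (h : option nat -> bool -> R) f : sqi P f ->
  Rint (fun x => h (S x) (Q x) * f x) =
  \sum_(sq <- cells) h sq.1 sq.2 * Rint (fun x => \1_(cell sq.1 sq.2) x * f x).
Proof.
move=> hf.
have hi : forall sq : option nat * bool,
    P.-integrable setT (EFin \o (fun x => \1_(cell sq.1 sq.2) x * f x)).
  move=> sq; apply: sqi_int; apply: (sqi_bmul (M := 1)) => //.
    exact/measurable_realfun.measurable_indic/cell_meas.
  by move=> x; rewrite indicE; case: (_ \in _); rewrite ?normr1 ?normr0.
rewrite (eq_bigr (fun sq => Rint (fun x => h sq.1 sq.2 * (\1_(cell sq.1 sq.2) x * f x)))); last by move=> sq _; rewrite RintZ.
rewrite -Rint_sum; last by move=> sq; apply: int_scale.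
apply: eq_Rintegral => x _; rewrite SQdecomp mulr_suml; apply: eq_bigr => i _.
by rewrite mulrA.
Qed.

Lemma Rint_sum_in (I : eqType) (s : seq I) (f : I -> Omega -> R) :
  (forall i, i \in s -> P.-integrable setT (EFin \o f i)) ->
  Rint (fun x => \sum_(i <- s) f i x) = \sum_(i <- s) Rint (f i).
Proof.
elim: s => [|i s IH] hf.
  rewrite big_nil; under eq_Rintegral do rewrite big_nil.
  by rewrite Rintegral_cst // mul0r.
have hi : P.-integrable setT (EFin \o f i) by apply: hf; rewrite mem_head.
have hs : forall j, j \in s -> P.-integrable setT (EFin \o f j).
  by move=> j js; apply: hf; rewrite in_cons js orbT.
rewrite big_cons -IH //; under eq_Rintegral do rewrite big_cons.
rewrite RintD //.
elim: s {IH hf} hs => [|k s IH'] hs'.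
  apply: (eq_integrable measurableT _ _ _ (int_cst P 0)).
  by move=> x _ /=; rewrite big_nil.
have hk : P.-integrable setT (EFin \o f k) by apply: hs'; rewrite mem_head.
have hs2 : forall j, j \in s -> P.-integrable setT (EFin \o f j).
  by move=> j js; apply: hs'; rewrite in_cons js orbT.
have := int_add hk (IH' hs2).
by apply: eq_integrable => // x _ /=; rewrite big_cons.
Qed.

Definition ip (u v : nat -> Omega -> R) : R :=
  \sum_(1 <= t < T.+1) Rint (fun x => u t x * v t x).

Definition Vp (u : nat -> Omega -> R) := forall t, (1 <= t <= T)%N -> sqi P (u t).

Lemma ipC u v : ip u v = ip v u.
Proof.
by apply: eq_bigr => t _; apply: eq_Rintegral => x _; rewrite mulrC.
Qed.

Lemma ip_sum2 (I : Type) (s : seq I) (c : I -> R) u (v : I -> nat -> Omega -> R) :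
  Vp u -> (forall i, Vp (v i)) ->
  ip u (fun t x => \sum_(i <- s) c i * v i t x) = \sum_(i <- s) c i * ip u (v i).
Proof.
move=> hu hv; rewrite /ip.
under [RHS]eq_bigr => i _ do rewrite mulr_sumr.
rewrite (exchange_big_dep xpredT) //= big_nat [RHS]big_nat; apply: eq_bigr => t ht.
have hi : forall i, P.-integrable setT (EFin \o (fun x => u t x * v i t x)).
  by move=> i; apply: sqi_mulI; [apply: hu | apply: hv].
rewrite (eq_Rintegral _ (g := fun x => \sum_(i <- s) c i * (u t x * v i t x))); last first.
  by move=> x _; rewrite mulr_sumr; apply: eq_bigr => i _; rewrite mulrCA.
rewrite Rint_sum; last by move=> i; apply: int_scale.
by apply: eq_bigr => i _; rewrite RintZ.
Qed.

Lemma ipD2 u v w : Vp u -> Vp v -> Vp w ->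
  ip u (fun t x => v t x + w t x) = ip u v + ip u w.
Proof.
move=> hu hv hw; rewrite /ip -big_split /= !big_nat; apply: eq_bigr => t ht.
rewrite -RintD; first by apply: eq_Rintegral => x _; rewrite mulrDr.
  by apply: sqi_mulI; [apply: hu | apply: hv].
by apply: sqi_mulI; [apply: hu | apply: hw].
Qed.

Lemma ipZ2 u v k : Vp u -> Vp v -> ip u (fun t x => k * v t x) = k * ip u v.
Proof.
move=> hu hv; rewrite /ip mulr_sumr !big_nat; apply: eq_bigr => t ht.
rewrite -RintZ; first by apply: eq_Rintegral => x _; rewrite mulrCA.
by apply: sqi_mulI; [apply: hu | apply: hv].
Qed.

Lemma ip0 u : ip u (fun _ _ => 0) = 0.
Proof.
rewrite /ip big1 // => t _; under eq_Rintegral do rewrite mulr0.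
by rewrite Rintegral_cst // mul0r.
Qed.

Lemma ip_sum_in (I : eqType) (s : seq I) (c : I -> R) u (v : I -> nat -> Omega -> R) :
  Vp u -> (forall i, i \in s -> Vp (v i)) ->
  ip u (fun t x => \sum_(i <- s) c i * v i t x) = \sum_(i <- s) c i * ip u (v i).
Proof.
move=> hu; elim: s => [|i s IH] hv.
  rewrite big_nil; transitivity (ip u (fun _ _ => 0)); last exact: ip0.
  apply: eq_bigr => t _; apply: eq_Rintegral => x _.
  by rewrite big_nil.
have hi : Vp (v i) by apply: hv; rewrite mem_head.
have hs : forall j, j \in s -> Vp (v j) by move=> j js; apply: hv; rewrite in_cons js orbT.
rewrite big_cons -IH // -ipZ2 // -ipD2 //.
- by apply: eq_bigr => t _; apply: eq_Rintegral => x _; rewrite big_cons.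
- by move=> t ht; apply: sqi_scale; apply: hi.
- move=> t ht; apply: sqi_sum_in => j js; apply: sqi_scale; exact: hs.
Qed.

End Panel.

End H2.
Import H2.

Module H3.

Lemma quad_zero (R : realType) (A b c : R) : 0 <= c ->
  (forall s, A <= A - 2 * s * b + s ^+ 2 * c) -> b = 0.
Proof.
move=> c0 H; set s := b / (c + 1).
have hb : b = s * (c + 1) by rewrite /s divfK // gt_eqF // ltr_wpDl.
have := H s; rewrite {2}hb => h.
have h2 : s * s * (c + 2) <= 0 by nra.
have h3 : s * s <= 0.
  have c2 : 0 < c + 2 by lra.
  by rewrite -(pmulr_lle0 _ c2).
have : s * s = 0 by apply/eqP; rewrite eq_le h3 /=; nra.
move=> ss; have s0 : s = 0 by apply/eqP; rewrite -[s == 0]orbb -mulf_eq0 ss.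
by rewrite s0 mul0r.
Qed.

Section Loss.
Variables (R : realType) (d : measure_display) (Omega : measurableType d).
Variable (P : probability Omega R).
Variables (T L K : nat) (Sset : seq (option nat)) (S : Omega -> option nat) (Q : Omega -> bool).
Hypothesis HS : forall x, S x \in Sset.
Hypothesis HSm : forall s, measurable (S @^-1` [set s]).
Hypothesis HQm : measurable (Q @^-1` [set true]).
Hypothesis HT : (0 < T)%N.

Implicit Types (Z : nat -> Omega -> R) (a : Omega -> R) (dl : option nat -> nat -> R) (et : bool -> nat -> R) (al : int -> R).
Notation Vp := (Vp P T).
Notation ip := (ip P T).

Definition rind (e : int) (t : nat) (s : option nat) (q : bool) : R :=
  match s with Some g => if q && (t%:Z - g%:Z == e) then 1 else 0 | None => 0 end.

Lemma RindE e t x : Rind S Q e t x = rind e t (S x) (Q x).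
Proof. by rewrite /Rind /rind; case: (S x). Qed.

Definition kfit (dl : option nat -> nat -> R) (et : bool -> nat -> R) (al : int -> R)
  (t : nat) (s : option nat) (q : bool) : R :=
  dl s t + et q t + \sum_(e <- Eseq L K) al e * rind e t s q.

Lemma fitvalE a dl et al t x :
  fitval L K S Q a dl et al t x = a x + kfit dl et al t (S x) (Q x).
Proof.
rewrite /fitval /kfit !addrA; congr (_ + _).
Qed.

Lemma fit_meas a dl et al t : measurable_fun setT a ->
  measurable_fun setT (fitval L K S Q a dl et al t).
Proof.
move=> ma; apply: (eq_measurable_fun (fun x => a x + kfit dl et al t (S x) (Q x))).
  by move=> x _; rewrite fitvalE.
apply: measurable_realfun.measurable_funD => //.
exact: (meas_SQ HS HSm HQm (kfit dl et al t)).
Qed.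

Lemma fit_sqi a dl et al t : sqi P a -> sqi P (fitval L K S Q a dl et al t).
Proof.
move=> ha; have := sqi_add ha (sqi_SQ P HS HSm HQm (kfit dl et al t)); case=> m i; split.
  by apply: (eq_measurable_fun _ _ m) => x _; rewrite fitvalE.
by apply: (eq_integrable measurableT _ _ _ i) => x _ /=; rewrite fitvalE.
Qed.

Lemma fit_Vp a dl et al : sqi P a -> Vp (fitval L K S Q a dl et al).
Proof. by move=> ha t _; apply: fit_sqi. Qed.

Lemma fitval_lin a dl et al a' dl' et' al' (s : R) (al'' : int -> R) t x :
  (forall e, al'' e = al e + s * al' e) ->
  fitval L K S Q (fun x => a x + s * a' x) (fun g t => dl g t + s * dl' g t)
    (fun q t => et q t + s * et' q t) al'' t x =
  fitval L K S Q a dl et al t x + s * fitval L K S Q a' dl' et' al' t x.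
Proof.
move=> hal; rewrite /fitval.
under eq_bigr => e _ do rewrite hal mulrDl -mulrA.
rewrite big_split /= -mulr_sumr; ring.
Qed.

Definition condf (f : nat -> Omega -> R) (t : nat) (x : Omega) : R :=
  if (1 <= t <= T)%N then f t x else 0.

Lemma condfT f t x : (1 <= t <= T)%N -> condf f t x = f t x.
Proof. by rewrite /condf => ->. Qed.

Lemma condfF f t x : ~~ (1 <= t <= T)%N -> condf f t x = 0.
Proof. by rewrite /condf => /negbTE ->. Qed.

Lemma condf_sum f x : \sum_(1 <= t < T.+1) condf f t x = \sum_(1 <= t < T.+1) f t x.
Proof. by rewrite !big_nat; apply: eq_bigr => t ht; rewrite condfT. Qed.

Definition resid (Z : nat -> Omega -> R) a dl et al : nat -> Omega -> R :=
  fun t x => Z t x - fitval L K S Q a dl et al t x.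

Lemma sum_cond_int (f : nat -> Omega -> R) :
  (forall t, (1 <= t <= T)%N -> P.-integrable setT (EFin \o f t)) ->
  (\int[P]_x (\sum_(1 <= t < T.+1) f t x)%:E = (\sum_(1 <= t < T.+1) \int[P]_x f t x)%:E)%E.
Proof.
move=> hf.
have -> : (fun x => (\sum_(1 <= t < T.+1) f t x)%:E) =
          (fun x => \sum_(1 <= t < T.+1) (condf f t x)%:E)%E.
  by apply/funext => x; rewrite sumEFin condf_sum.
have ig : forall t, P.-integrable setT (fun x => (condf f t x)%:E).
  move=> t; case: (boolP (1 <= t <= T)%N) => ht.
    by under eq_fun do rewrite condfT //; exact: hf.
  by under eq_fun do rewrite condfF //; exact: (int_cst P 0).
rewrite (integral_sum measurableT ig).
rewrite -sumEFin !big_nat; apply: eq_bigr => t ht.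
have ht' : (1 <= t <= T)%N by [].
under eq_integral do rewrite condfT //.
have ift := hf t ht'.
rewrite /Rintegral fineK //; exact: (integrable_fin_num measurableT ift).
Qed.

Lemma loss_ip (r : nat -> Omega -> R) : Vp r ->
  (\int[P]_x (\sum_(1 <= t < T.+1) (r t x) ^+ 2)%:E = (ip r r)%:E)%E.
Proof.
move=> hr; rewrite sum_cond_int; last first.
  by move=> t ht; apply: sq_int; apply: hr.
by rewrite /ip; congr (_%:E); apply: eq_bigr => t _; apply: eq_Rintegral => x _; rewrite expr2.
Qed.

Lemma loss_fin_Vp (r : nat -> Omega -> R) :
  (forall t, (1 <= t <= T)%N -> measurable_fun setT (r t)) ->
  (\int[P]_x (\sum_(1 <= t < T.+1) (r t x) ^+ 2)%:E < +oo)%E -> Vp r.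
Proof.
move=> mr fin t ht; split; first exact: mr.
pose g := condf (fun t x => r t x ^+ 2).
have eg : (fun x => \sum_(1 <= t < T.+1) r t x ^+ 2) = (fun x => \sum_(1 <= t < T.+1) g t x).
  by apply/funext => x; rewrite condf_sum.
have mg : measurable_fun setT (fun x => \sum_(1 <= t < T.+1) g t x).
  apply: measurable_sum => u; case: (boolP (1 <= u <= T)%N) => hu.
    apply: (eq_measurable_fun (fun x => r u x ^+ 2)); first by move=> x _; rewrite /g condfT.
    by apply: measurable_realfun.measurable_funX; apply: mr.
  apply: (eq_measurable_fun (fun _ : Omega => (0:R))); first by move=> x _; rewrite /g condfF.
  exact: measurable_cst.
have ig : P.-integrable setT (EFin \o (fun x => \sum_(1 <= t < T.+1) g t x)).
  apply/integrableP; split; first exact/measurable_realfun.measurable_EFinP.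
  rewrite -eg in fin *; apply: le_lt_trans fin; rewrite le_eqVlt; apply/orP; left.
  apply/eqP; apply: eq_integral => x _ /=; rewrite ger0_norm //.
  by apply: sumr_ge0 => u _; apply: sqr_ge0.
apply: (int_le (g := fun x => \sum_(1 <= t < T.+1) g t x)) => //.
  by apply: measurable_realfun.measurable_funX; apply: mr.
move=> x; rewrite ger0_norm ?sqr_ge0 //.
rewrite /g condf_sum (bigD1_seq t) /=; last first.
- exact: iota_uniq.
- by rewrite mem_index_iota ltnS.
by rewrite lerDl sumr_ge0 // => u _; rewrite sqr_ge0.
Qed.


Lemma Rint_expand (u v : Omega -> R) (s : R) : sqi P u -> sqi P v ->
  \int[P]_x ((u x - s * v x) * (u x - s * v x)) =
  \int[P]_x (u x * u x) - 2 * s * \int[P]_x (u x * v x) + s ^+ 2 * \int[P]_x (v x * v x).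
Proof.
move=> hu hv.
have iuu := sqi_mulI hu hu; have iuv := sqi_mulI hu hv; have ivv := sqi_mulI hv hv.
rewrite (eq_Rintegral _ (g := fun x => u x * u x + ((- (2 * s)) * (u x * v x) + s ^+ 2 * (v x * v x)))); last first.
  by move=> x _; ring.
rewrite RintD //; last by apply: int_add; apply: int_scale.
rewrite RintD //; try by apply: int_scale.
rewrite !RintZ //; ring.
Qed.

Lemma ip_expand (u v : nat -> Omega -> R) (s : R) : Vp u -> Vp v ->
  ip (fun t x => u t x - s * v t x) (fun t x => u t x - s * v t x) =
  ip u u - 2 * s * ip u v + s ^+ 2 * ip v v.
Proof.
move=> hu hv; rewrite /H2.ip big_nat.
rewrite (eq_bigr (fun t => \int[P]_x (u t x * u t x) - 2 * s * \int[P]_x (u t x * v t x)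
   + s ^+ 2 * \int[P]_x (v t x * v t x))); last first.
  move=> t ht; apply: Rint_expand; [apply: hu | apply: hv]; exact: ht.
rewrite !big_split /= -!big_nat sumrN -!mulr_sumr; ring.
Qed.

Lemma ip_ge0 (v : nat -> Omega -> R) : 0 <= ip v v.
Proof.
apply: sumr_ge0 => t _; apply: Rintegral_ge0 => x _.
by rewrite -expr2 sqr_ge0.
Qed.

Lemma orth_core (r F : nat -> Omega -> R) : Vp r -> Vp F ->
  (forall s, (ip r r)%:E <= \int[P]_x (\sum_(1 <= t < T.+1) (r t x - s * F t x) ^+ 2)%:E)%E ->
  ip r F = 0.
Proof.
move=> hr hF H; apply: (quad_zero (A := ip r r) (c := ip F F)); first exact: ip_ge0.
move=> s; have V : Vp (fun t x => r t x - s * F t x).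
  by move=> t ht; apply: sqi_sub; [apply: hr | apply: sqi_scale; apply: hF].
have := H s; rewrite (loss_ip V) lee_fin ip_expand //.
Qed.

Lemma loss_shift Z a dl et al a' dl' et' al' (s : R) al'' :
  (forall e, al'' e = al e + s * al' e) ->
  lsloss P T L K S Q Z (fun x => a x + s * a' x) (fun g t => dl g t + s * dl' g t)
    (fun q t => et q t + s * et' q t) al'' =
  (\int[P]_x (\sum_(1 <= t < T.+1)
     (resid Z a dl et al t x - s * fitval L K S Q a' dl' et' al' t x) ^+ 2)%:E)%E.
Proof.
move=> hal; rewrite /lsloss; apply: eq_integral => x _; congr (_%:E).
apply: eq_bigr => t _; rewrite (fitval_lin _ _ _ _ _ _ _ _ hal) /resid; congr (_ ^+ 2); ring.
Qed.

Lemma lossE Z a dl et al : lsloss P T L K S Q Z a dl et al =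
  (\int[P]_x (\sum_(1 <= t < T.+1) (resid Z a dl et al t x) ^+ 2)%:E)%E.
Proof. by []. Qed.



Lemma loss_fin Z a dl et al : Vp Z -> measurable_fun setT a ->
  (forall a' dl' et' al', measurable_fun setT a' ->
     (lsloss P T L K S Q Z a dl et al <= lsloss P T L K S Q Z a' dl' et' al')%E) ->
  Vp (resid Z a dl et al).
Proof.
move=> hZ ma Hmin.
have V0 : Vp (resid Z (fun _ => 0) (fun _ _ => 0) (fun _ _ => 0) (fun _ => 0)).
  by move=> t ht; apply: sqi_sub; [apply: hZ | apply: fit_sqi; apply: sqi_cst].
apply: loss_fin_Vp.
  move=> t ht; apply: measurable_realfun.measurable_funB; first by case: (hZ t ht).
  exact: fit_meas.
rewrite -lossE.
have H0 := Hmin (fun _ => 0) (fun _ _ => 0) (fun _ _ => 0) (fun _ => 0) (measurable_cst (0:R)).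
apply: (le_lt_trans H0).
by rewrite lossE loss_ip // ltry.
Qed.

Lemma sqi_a_of Z a dl et al : Vp Z -> Vp (resid Z a dl et al) -> sqi P a.
Proof.
move=> hZ hr.
have h1 := sqi_sub (sqi_sub (hZ 1%N HT) (hr 1%N HT)) (sqi_SQ P HS HSm HQm (kfit dl et al 1)).
have -> : a = (fun x => Z 1%N x - resid Z a dl et al 1%N x - kfit dl et al 1 (S x) (Q x)).
  by apply/funext => x; rewrite /resid fitvalE; ring.
exact: h1.
Qed.

Lemma ols_orth Z al : Vp Z -> ols_coef P T L K S Q Z al ->
  exists a dl et, sqi P a /\ Vp (resid Z a dl et al) /\
    forall a' dl' et' al', sqi P a' ->
      ip (resid Z a dl et al) (fitval L K S Q a' dl' et' al') = 0.
Proof.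
move=> hZ [a [dl [et [ma Hmin]]]].
have hr := loss_fin hZ ma Hmin.
exists a, dl, et; split; first exact: (sqi_a_of hZ hr).
split => // a' dl' et' al' ha'.
apply: orth_core => //; first exact: fit_Vp.
move=> s.
have E := @loss_shift Z a dl et al a' dl' et' al' s (fun e => al e + s * al' e) (fun e => erefl).
rewrite -loss_ip // -lossE -E.
apply: Hmin; apply: measurable_realfun.measurable_funD => //.
by apply: measurable_realfun.measurable_funM => //; case: ha'.
Qed.

Lemma fe_orth Z a dl et : Vp Z -> fe_proj P T L K S Q Z a dl et ->
  sqi P a /\ Vp (resid Z a dl et (fun _ => 0)) /\
    forall a' dl' et', sqi P a' ->
      ip (resid Z a dl et (fun _ => 0)) (fitval L K S Q a' dl' et' (fun _ => 0)) = 0.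
Proof.
move=> hZ [ma Hmin].
have hr : Vp (resid Z a dl et (fun _ => 0)).
  have V0 : Vp (resid Z (fun _ => 0) (fun _ _ => 0) (fun _ _ => 0) (fun _ => 0)).
    by move=> t ht; apply: sqi_sub; [apply: hZ | apply: fit_sqi; apply: sqi_cst].
  apply: loss_fin_Vp.
    move=> t ht; apply: measurable_realfun.measurable_funB; first by case: (hZ t ht).
    exact: fit_meas.
  rewrite -lossE.
  have H0 := Hmin (fun _ => 0) (fun _ _ => 0) (fun _ _ => 0) (measurable_cst (0:R)).
  apply: (le_lt_trans H0).
  by rewrite lossE loss_ip // ltry.
split; first exact: (sqi_a_of hZ hr).
split => // a' dl' et' ha'.
apply: orth_core => //; first exact: fit_Vp.
move=> s.
have E := @loss_shift Z a dl et (fun _ => 0) a' dl' et' (fun _ => 0) s (fun _ => 0)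
  (fun e => esym (etrans (congr1 (fun y => 0 + y) (mulr0 s)) (addr0 0))).
rewrite -loss_ip // -lossE -E.
apply: Hmin; apply: measurable_realfun.measurable_funD => //.
by apply: measurable_realfun.measurable_funM => //; case: ha'.
Qed.

End Loss.

End H3.
Import H3.

Module H4.

Section Gram.
Variables (R : realType) (d : measure_display) (Omega : measurableType d).
Variable (P : probability Omega R).
Variables (T L K : nat) (Sset : seq (option nat)) (S : Omega -> option nat) (Q : Omega -> bool).
Hypothesis HS : forall x, S x \in Sset.
Hypothesis HSm : forall s, measurable (S @^-1` [set s]).
Hypothesis HQm : measurable (Q @^-1` [set true]).
Hypothesis HT : (0 < T)%N.
Implicit Types (Z : nat -> Omega -> R) (a : Omega -> R) (dl : option nat -> nat -> R) (et : bool -> nat -> R) (al : int -> R).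
Notation Vp := (Vp P T).
Notation ip := (ip P T).

Lemma Vp_Rind e : Vp (Rind S Q e).
Proof.
move=> t _; have -> : Rind S Q e t = (fun x => rind R e t (S x) (Q x)).
  by apply/funext => x; rewrite RindE.
exact: (sqi_SQ P HS HSm HQm).
Qed.

Lemma Vp_SQ (k : nat -> option nat -> bool -> R) : Vp (fun t x => k t (S x) (Q x)).
Proof. by move=> t _; exact: (sqi_SQ P HS HSm HQm (k t)). Qed.

Variables (A : int -> Omega -> R) (D : int -> option nat -> nat -> R) (H : int -> bool -> nat -> R).
Hypothesis HA : forall e, e \in Eseq L K -> fe_proj P T L K S Q (Rind S Q e) (A e) (D e) (H e).
Hypothesis Hunit : gram P T L K S Q A D H \in unitmx.

Definition rd e := Rdm L K S Q e (A e) (D e) (H e).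

Lemma feA e : e \in Eseq L K -> sqi P (A e) /\ Vp (rd e) /\
  forall a' dl' et', sqi P a' -> ip (rd e) (fitval L K S Q a' dl' et' (fun _ => 0)) = 0.
Proof. move=> he; exact: (fe_orth HS HSm HQm HT (Vp_Rind e) (HA he)). Qed.

Lemma gramE (i j : 'I_(size (Eseq L K))) :
  gram P T L K S Q A D H i j = ip (rd (nth 0 (Eseq L K) i)) (rd (nth 0 (Eseq L K) j)).
Proof.
rewrite mxE /= (sum_cond_int (T := T)) /=; first by [].
have [_ [hi _]] := feA (mem_nth 0 (ltn_ord i)).
have [_ [hj _]] := feA (mem_nth 0 (ltn_ord j)).
by move=> t ht; apply: sqi_mulI; [apply: hi | apply: hj].
Qed.

Lemma KL a dl et (be : int -> R) : sqi P a ->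
  (forall j, j \in Eseq L K -> ip (fitval L K S Q a dl et be) (rd j) = 0) ->
  forall e, e \in Eseq L K -> be e = 0.
Proof.
move=> ha Hj.
pose a2 x := a x + \sum_(e <- Eseq L K) be e * A e x.
pose dl2 s t := dl s t + \sum_(e <- Eseq L K) be e * D e s t.
pose et2 q t := et q t + \sum_(e <- Eseq L K) be e * H e q t.
have ha2 : sqi P a2.
  apply: sqi_add => //; apply: sqi_sum_in => e he; apply: sqi_scale.
  by have [] := feA he.
have decomp : fitval L K S Q a dl et be =
   (fun t x => fitval L K S Q a2 dl2 et2 (fun _ => 0) t x + \sum_(e <- Eseq L K) be e * rd e t x).
  apply/funext => t; apply/funext => x.
  rewrite /fitval /rd /Rdm /fitval /a2 /dl2 /et2.
  have z0 : forall (f : int -> R), \sum_(e <- Eseq L K) 0 * f e = 0.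
    by move=> f; rewrite big1 // => e _; rewrite mul0r.
  rewrite z0.
  under [X in _ = _ + X]eq_bigr => e _ do rewrite addr0 !mulrDr mulrN !mulrDr.
  rewrite sumrB !big_split /=; ring.
have Hj2 : forall j, j \in Eseq L K ->
    \sum_(e <- Eseq L K) be e * ip (rd e) (rd j) = 0.
  move=> j hj; have [_ [Vj Oj]] := feA hj.
  have := Hj j hj; rewrite ipC decomp ipD2 //; last first.
  - move=> t ht; apply: sqi_sum_in => e he; apply: sqi_scale.
    by have [_ [Ve _]] := feA he; apply: Ve.
  - by apply: fit_Vp.
  rewrite Oj // add0r ip_sum_in //; last by move=> e he; have [_ []] := feA he.
  by move=> h0; rewrite -[RHS]h0; apply: eq_bigr => e _; rewrite ipC.
pose n := size (Eseq L K).
pose v := \row_(i < n) be (nth 0 (Eseq L K) i).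
have v0 : v *m gram P T L K S Q A D H = 0.
  apply/rowP => j; rewrite !mxE.
  transitivity (\sum_(e <- Eseq L K) be e * ip (rd e) (rd (nth 0 (Eseq L K) j))); last first.
    exact: Hj2 _ (mem_nth 0 (ltn_ord j)).
  rewrite (big_nth 0) big_mkord; apply: eq_bigr => i _.
  by rewrite mxE gramE.
have vz : v = 0 by rewrite -(mulmxK Hunit v) v0 mul0mx.
move=> e he; have ie : (index e (Eseq L K) < n)%N by rewrite index_mem.
have := congr1 (fun M : 'rV[R]_n => M 0 (Ordinal ie)) vz; rewrite !mxE /= nth_index //.
Qed.

End Gram.

End H4.
Import H4.

Module H5.

Lemma mem_Eseq L K e : (e \in Eseq L K) = ((- (L%:Z) <= e <= K%:Z) && (e != -1)).
Proof.
rewrite /Eseq mem_filter andbC; congr andb.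
apply/mapP/idP.
  by move=> [k]; rewrite mem_iota => hk ->; lia.
move=> he; exists (absz (e + L%:Z)%R); first by rewrite mem_iota; lia.
lia.
Qed.

Lemma uniq_Eseq L K : uniq (Eseq L K).
Proof.
rewrite /Eseq filter_uniq // map_inj_uniq ?iota_uniq // => k1 k2 /= h; lia.
Qed.

Lemma Eseq0 L K : 0 \in Eseq L K.
Proof. by rewrite mem_Eseq; lia. Qed.

Lemma mem_Gtrg Sset g : (g \in Gtrg Sset) = (Some g \in Sset).
Proof. by rewrite /Gtrg mem_undup mem_pmap map_id. Qed.

Lemma uniq_Gtrg Sset : uniq (Gtrg Sset).
Proof. exact: undup_uniq. Qed.

Section NoneIn.
Variables (R : realType) (d : measure_display) (Omega : measurableType d).
Variable (P : probability Omega R).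
Variables (T L K : nat) (Sset : seq (option nat)) (S : Omega -> option nat) (Q : Omega -> bool).
Hypothesis HS : forall x, S x \in Sset.
Hypothesis HSm : forall s, measurable (S @^-1` [set s]).
Hypothesis HQm : measurable (Q @^-1` [set true]).
Hypothesis HW : forall g t, Some g \in Sset -> (1 <= t <= T)%N ->
     - (L%:Z) <= t%:Z - g%:Z <= K%:Z.
Variables (A : int -> Omega -> R) (D : int -> option nat -> nat -> R) (H : int -> bool -> nat -> R).
Hypothesis HA : forall e, e \in Eseq L K -> fe_proj P T L K S Q (Rind S Q e) (A e) (D e) (H e).
Hypothesis Hunit : gram P T L K S Q A D H \in unitmx.

Lemma T_pos : (0 < T)%N.
Proof.
case: T Hunit HA => [|T'] // Hu _.
have G0 : gram P 0 L K S Q A D H = 0.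
  apply/matrixP => i j; rewrite !mxE /=.
  under eq_integral do rewrite big_geq //.
  by rewrite integral0.
pose n := size (Eseq L K).
pose v : 'rV[R]_n := const_mx 1.
have : v = 0 by rewrite -(mulmxK Hu v) G0 mulmx0 mul0mx.
have ie : (index (0:int) (Eseq L K) < n)%N by rewrite index_mem Eseq0.
move/(congr1 (fun M : 'rV[R]_n => M 0 (Ordinal ie))); rewrite !mxE => /eqP.
by rewrite oner_eq0.
Qed.

Lemma ip_zero_l (F G : nat -> Omega -> R) :
  (forall t x, (1 <= t <= T)%N -> F t x = 0) -> ip P T F G = 0.
Proof.
move=> hF; rewrite /ip big_nat big1 // => t ht.
rewrite (eq_Rintegral _ (g := fun _ => 0)); first by rewrite Rintegral_cst // mul0r.
by move=> x _; rewrite hF // mul0r.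
Qed.

Lemma NoneIn : None \in Sset.
Proof.
have HT := T_pos.
apply/negPn/negP => hN.
pose a x : R := if Q x then (if S x is Some g then g%:R else 0) else 0.
pose et (q : bool) (t : nat) : R := if q then - (t%:R + 1) else 0.
pose be (e : int) : R := (e + 1)%:~R.
have ha : sqi P a.
  exact: (sqi_SQ P HS HSm HQm (fun s q => if q then (if s is Some g then g%:R else 0) else 0)).
suff key : forall j, j \in Eseq L K ->
    ip P T (fitval L K S Q a (fun _ _ => 0) et be) (rd L K S Q A D H j) = 0.
  have := KL HS HSm HQm HT HA Hunit ha key (Eseq0 L K).
  by rewrite /be add0r => /eqP; rewrite oner_eq0.
move=> j hj; apply: ip_zero_l => t x ht.
rewrite /fitval /a /et /be.
have hSx := HS x.
case eS : (S x) hSx => [g|]; last by rewrite (negbTE hN).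
move=> hg.
have Rz : forall e : int, Rind S Q e t x = (Q x && (e == t%:Z - g%:Z))%:R :> R.
  by move=> e; rewrite /Rind eS /= (eq_sym e); case: (_ && _).
under eq_bigr do rewrite Rz.
case: (Q x) => /=.
  have hw := HW hg ht.
  have e1 : (t%:Z)%:~R = t%:R :> R by [].
  have e2 : (g%:Z)%:~R = g%:R :> R by [].
  have e3 : (1:int)%:~R = 1 :> R by [].
  case: (boolP (t%:Z - g%:Z \in Eseq L K)) => hin.
    rewrite sum_delta ?uniq_Eseq // intrD intrB /= e1 e2 e3.
    lra.
  have htg : t%:Z - g%:Z = -1 by move: hin; rewrite mem_Eseq hw /= negbK => /eqP.
  have htgR : t%:R - g%:R = -1 :> R.
    by have := congr1 (fun z : int => z%:~R : R) htg; rewrite intrB /= e1 e2.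
  rewrite htg big_seq big1 => [|e he]; first by rewrite !addr0; lra.
  by move: he; rewrite mem_Eseq => /andP[_ /negbTE ->]; rewrite mulr0.
rewrite big1 => [|e _]; first by rewrite !addr0.
by rewrite mulr0.
Qed.

End NoneIn.

End H5.
Import H5.

Module H6.

Section Heart.
Variables (R : realType) (d : measure_display) (Omega : measurableType d).
Variable (P : probability Omega R).
Variables (T L K : nat) (Sset : seq (option nat)) (S : Omega -> option nat) (Q : Omega -> bool)
  (Y : option nat -> nat -> Omega -> R).
Hypothesis HS : forall x, S x \in Sset.
Hypothesis HSm : forall s, measurable (S @^-1` [set s]).
Hypothesis HQm : measurable (Q @^-1` [set true]).
Hypothesis HYm : forall s t, (s \in Sset \/ s = None) -> measurable_fun setT (Y s t).
Hypothesis HY2 : forall s t, (s \in Sset \/ s = None) -> (1 <= t <= T)%N ->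
     P.-integrable setT (fun x => ((Y s t x) ^+ 2)%:E).
Hypothesis Hpos : forall s q, s \in Sset -> (0 < P [set x | S x = s /\ Q x = q])%E.
Hypothesis HW : forall g t, Some g \in Sset -> (1 <= t <= T)%N ->
     - (L%:Z) <= t%:Z - g%:Z <= K%:Z.
Hypothesis HNA : forall g t, g \in Gtrg Sset -> (1 <= t < g)%N ->
     {ae P, forall x, Y (Some g) t x = Y None t x}.
Hypothesis HT : (0 < T)%N.

Notation Gt := (Gtrg Sset).
Notation cell := (cell S Q).
Definition ci (f : Omega -> R) s q := \int[P]_x (\1_(cell s q) x * f x).
Definition pc s q := fine (P (cell s q)).

Lemma sqiY s t : (s \in Sset \/ s = None) -> (1 <= t <= T)%N -> sqi P (Y s t).
Proof. by move=> hs ht; split; [apply: HYm | apply: HY2]. Qed.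

Lemma pc_gt0 s q : s \in Sset -> 0 < pc s q.
Proof.
move=> hs; apply: fine_gt0; rewrite Hpos //=.
apply: (le_lt_trans (probability_le1 P (cell_meas HSm HQm s q))); exact: ltry.
Qed.

Lemma sqi_ind f s q : sqi P f -> sqi P (fun x => \1_(cell s q) x * f x).
Proof.
move=> hf; apply: (sqi_bmul (M := 1)) => //.
  exact/measurable_realfun.measurable_indic/(cell_meas HSm HQm).
by move=> x; rewrite indicE; case: (_ \in _); rewrite ?normr1 ?normr0.
Qed.

Lemma ciD f g s q : sqi P f -> sqi P g -> ci (fun x => f x + g x) s q = ci f s q + ci g s q.
Proof.
move=> hf hg; rewrite /ci -RintD; try by apply: sqi_int; apply: sqi_ind.
by apply: eq_Rintegral => x _; rewrite mulrDr.
Qed.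

Lemma ciZ k f s q : sqi P f -> ci (fun x => k * f x) s q = k * ci f s q.
Proof.
move=> hf; rewrite /ci -RintZ; last by apply: sqi_int; apply: sqi_ind.
by apply: eq_Rintegral => x _; rewrite mulrCA.
Qed.

Lemma ciB f g s q : sqi P f -> sqi P g -> ci (fun x => f x - g x) s q = ci f s q - ci g s q.
Proof.
move=> hf hg; rewrite -mulN1r -ciZ // -ciD //; last by apply: sqi_scale.
by apply: eq_Rintegral => x _; rewrite mulN1r.
Qed.

Lemma ci_cst k s q : ci (fun _ => k) s q = k * pc s q.
Proof.
rewrite /ci (eq_Rintegral _ (g := fun x => k * \1_(cell s q) x)); last by move=> x _; rewrite mulrC.
rewrite RintZ; last first.
  exact: (integrable_indic P (cell_meas HSm HQm s q)).
congr (_ * _); rewrite /Rintegral integral_indic //; last exact: cell_meas.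
by rewrite setIT.
Qed.

Lemma cmeanE f s q : s \in Sset -> cmean P f (cell s q) * pc s q = ci f s q.
Proof.
move=> hs; rewrite /cmean divfK; last by rewrite gt_eqF // pc_gt0.
rewrite -/(Rintegral P (cell s q) f) Rintegral_mkcond /ci.
apply: eq_Rintegral => x _; rewrite patchE indicE.
by case: (x \in cell s q); rewrite ?mul1r ?mul0r.
Qed.

Lemma ci_ae f g s q : measurable_fun setT f -> measurable_fun setT g ->
  {ae P, forall x, f x = g x} -> ci f s q = ci g s q.
Proof.
move=> mf mg hae; rewrite /ci /Rintegral; congr fine.
apply: ae_eq_integral => //.
- apply/measurable_realfun.measurable_EFinP; apply: measurable_realfun.measurable_funM => //.
  exact/measurable_realfun.measurable_indic/(cell_meas HSm HQm).
- apply/measurable_realfun.measurable_EFinP; apply: measurable_realfun.measurable_funM => //.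
  exact/measurable_realfun.measurable_indic/(cell_meas HSm HQm).
- by apply: filterS hae => x hx _ /=; rewrite hx.
Qed.


Lemma eq_some (g g' : nat) : (Some g == Some g') = (g == g').
Proof. by []. Qed.

Lemma Yobs_dec t x : Yobs Y S Q t x = Y None t x +
  \sum_(g <- Gt) ((S x == Some g) && Q x)%:R * (Y (Some g) t x - Y None t x).
Proof.
rewrite /Yobs; have := HS x; case e: (S x) => [g|] hx.
  have hg : g \in Gt by rewrite mem_Gtrg.
  rewrite (eq_bigr (fun g' => ((Q x)%:R * (Y (Some g') t x - Y None t x)) * (g' == g)%:R)); last first.
    move=> g' _; rewrite eq_some (eq_sym g).
    by case: (g' == g); case: (Q x); rewrite /= ?mul1r ?mul0r ?mulr1 ?mulr0.
  rewrite sum_delta ?uniq_Gtrg //.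
  by case: (Q x); rewrite ?mul1r ?mul0r ?addr0 //; ring.
by rewrite big1 ?addr0 // => g' _; rewrite mul0r.
Qed.

Lemma sqi_Yobs t : (1 <= t <= T)%N -> sqi P (Yobs Y S Q t).
Proof.
move=> ht; have -> : Yobs Y S Q t = (fun x => Y None t x +
  \sum_(g <- Gt) ((S x == Some g) && Q x)%:R * (Y (Some g) t x - Y None t x)).
  by apply/funext => x; rewrite Yobs_dec.
apply: sqi_add; first by apply: sqiY => //; right.
apply: sqi_sum_in => g hg.
apply: (sqi_SQmul HS HSm HQm (fun s q => ((s == Some g) && q)%:R : R)).
apply: sqi_sub; apply: sqiY => //; [left; by rewrite -mem_Gtrg | by right].
Qed.

Lemma RglE g l t x : Rgl S Q g l t x = ((S x == Some g) && Q x && (t == g + l)%N)%:R :> R.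
Proof. by rewrite /Rgl; case: (_ && _). Qed.

Lemma sqi_Rgl g l t : sqi P (Rgl S Q g l t).
Proof.
have -> : Rgl S Q g l t = (fun x => ((S x == Some g) && Q x && (t == g + l)%N)%:R : R).
  by apply/funext => x; rewrite RglE.
exact: (sqi_SQ P HS HSm HQm (fun s q => ((s == Some g) && q && (t == g + l)%N)%:R)).
Qed.

Definition W t x := Yobs Y S Q t x -
  \sum_(g <- Gt) \sum_(0 <= l < K.+1) CATT P Y S Q g l * Rgl S Q g l t x.

Lemma sqi_W t : (1 <= t <= T)%N -> sqi P (W t).
Proof.
move=> ht; apply: sqi_sub; first exact: sqi_Yobs.
apply: sqi_sum => g; apply: sqi_sum => l; apply: sqi_scale; exact: sqi_Rgl.
Qed.

Definition wcell (s : option nat) (q : bool) t x : R :=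
  match s with
  | Some g => if q then Y (Some g) t x - (if (g <= t)%N then CATT P Y S Q g (t - g) else 0)
              else Y None t x
  | None => Y None t x
  end.

Lemma W_cell t x : (1 <= t <= T)%N -> W t x = wcell (S x) (Q x) t x.
Proof.
move=> ht; rewrite /W /wcell /Yobs; have := HS x.
case e: (S x) => [g|] hx; last first.
  rewrite big1 ?subr0 // => g' _; rewrite big1 // => l _.
  by rewrite RglE e mulr0.
case q: (Q x); last first.
  rewrite big1 ?subr0 // => g' _; rewrite big1 // => l _.
  by rewrite RglE e q andbF mulr0.
congr (_ - _).
have hg : g \in Gt by rewrite mem_Gtrg.
under eq_bigr => g' _ do under eq_bigr => l _ do rewrite RglE e q eq_some andbT.
rewrite (eq_bigr (fun g' => (\sum_(0 <= l < K.+1) CATT P Y S Q g' l * (t == g' + l)%N%:R)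
    * (g' == g)%:R)); last first.
  move=> g' _; rewrite mulr_suml; apply: eq_bigr => l _; rewrite (eq_sym g).
  by case: (g' == g); case: (t == g' + l)%N; rewrite /= ?mulr1 ?mulr0.
rewrite sum_delta ?uniq_Gtrg //.
case: (leqP g t) => hgt.
  have hw := HW hx ht.
  rewrite (eq_bigr (fun l => CATT P Y S Q g l * (l == t - g)%N%:R)); last first.
    by move=> l _; congr (_ * _%:R); apply/eqP/eqP; lia.
  rewrite /index_iota subn0 sum_delta ?iota_uniq // mem_iota; lia.
rewrite big1 // => l _; have -> : (t == g + l)%N = false by apply/eqP; lia.
by rewrite mulr0.
Qed.

Lemma ci_W t s q : (1 <= t <= T)%N -> ci (W t) s q = ci (wcell s q t) s q.
Proof.
move=> ht; apply: eq_Rintegral => x _; rewrite indic_cell.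
case: (eqVneq (S x) s) => [<-|]; case: (eqVneq (Q x) q) => [<-|] //=; rewrite ?mul0r //.
by rewrite W_cell.
Qed.

Lemma cellW t s q : s \in Sset -> (1 <= t <= T)%N -> ci (W t) s q = ci (Y None t) s q.
Proof.
move=> hs ht; rewrite ci_W //; case: s hs => [g|] hs //; case: q => //=.
have hg : g \in Gt by rewrite mem_Gtrg.
have sg := sqiY (or_introl hs) ht; have sn := sqiY (or_intror erefl) ht.
case: (leqP g t) => hgt.
  rewrite ciB //; last exact: sqi_cst.
  have ce := cmeanE (fun x => Y (Some g) t x - Y None t x) true hs.
  rewrite ci_cst /CATT subnKC //.
  rewrite [cmean _ _ _](_ : _ = cmean P (fun x => Y (Some g) t x - Y None t x) (cell (Some g) true)) //.
  rewrite hgt ce ciB //; first by ring.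
have -> : wcell (Some g) true t = Y (Some g) t.
  by apply/funext => x; rewrite /wcell leqNgt hgt subr0.
apply: ci_ae; first by case: sg.
  by case: sn.
apply: HNA => //; lia.
Qed.


Hypothesis HPT : forall g gc t, g \in Gtrg Sset -> gc \in Sset -> grp_gt gc g ->
     (2 <= t <= T)%N -> time_le t gc ->
     Delta P Y S Q t (Some g) true - Delta P Y S Q t (Some g) false =
     Delta P Y S Q t gc true - Delta P Y S Q t gc false.
Hypothesis HNone : None \in Sset.

Definition m s q t := cmean P (Y None t) (cell s q).
Definition Dm s t := m s true t - m s false t.
Definition A0 s (q : bool) := if q then Dm s 1 - Dm None 1 else 0.
Definition eta0 (q : bool) t := if q then Dm None t else 0.

Lemma Delta_m s q t : s \in Sset -> (2 <= t <= T)%N ->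
  Delta P Y S Q t s q = m s q t - m s q t.-1.
Proof.
move=> hs ht.
have h1 : (1 <= t <= T)%N by lia.
have h2 : (1 <= t.-1 <= T)%N by lia.
have s1 := sqiY (or_intror erefl) h1; have s2 := sqiY (or_intror erefl) h2.
apply: (mulIf (lt0r_neq0 (pc_gt0 q hs))).
rewrite mulrBl /m !cmeanE // -ciB //.
Qed.

Lemma Dm_const s t : s \in Sset -> (1 <= t <= T)%N -> Dm s t - Dm None t = Dm s 1 - Dm None 1.
Proof.
move=> hs; case: s hs => [g|] hs; last by rewrite !subrr.
have hg : g \in Gt by rewrite mem_Gtrg.
elim: t => [//|t IH] ht.
case: (eqVneq t 0) => [-> //|t0].
have ht1 : (1 <= t <= T)%N by lia.
rewrite -(IH ht1).
have ht2 : (2 <= t.+1 <= T)%N by lia.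
have := HPT hg HNone erefl ht2 erefl.
rewrite !Delta_m // /Dm /=; lra.
Qed.

Lemma m_struct s q t : s \in Sset -> (1 <= t <= T)%N ->
  m s q t = A0 s q + m s false t + eta0 q t.
Proof.
move=> hs ht; case: q; rewrite /A0 /eta0 /=; last by rewrite add0r addr0.
have := Dm_const hs ht; rewrite /Dm; lra.
Qed.

Definition u t x := W t x - m (S x) (Q x) t.
Definition ubar x := T%:R^-1 * \sum_(1 <= t < T.+1) u t x.
Definition a0 x := ubar x + A0 (S x) (Q x).
Definition dl0 s t := m s false t.
Definition rho := resid L K S Q (W) a0 dl0 eta0 (fun _ => 0).

Lemma sqi_u t : (1 <= t <= T)%N -> sqi P (u t).
Proof.
move=> ht; apply: sqi_sub; first exact: sqi_W.
exact: (sqi_SQ P HS HSm HQm (fun s q => m s q t)).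
Qed.

Lemma sqi_ubar : sqi P ubar.
Proof.
apply: sqi_scale; apply: sqi_sum_in => t; rewrite mem_index_iota => ht.
by apply: sqi_u; lia.
Qed.

Lemma sqi_a0 : sqi P a0.
Proof.
apply: sqi_add; first exact: sqi_ubar.
exact: (sqi_SQ P HS HSm HQm A0).
Qed.

Lemma rhoE t x : (1 <= t <= T)%N -> rho t x = u t x - ubar x.
Proof.
move=> ht; rewrite /rho /resid /fitval /u /a0 /dl0.
rewrite big1 => [|e _]; last by rewrite mul0r.
rewrite (m_struct (Q x) (HS x) ht); ring.
Qed.

Lemma Vp_rho : Vp P T rho.
Proof.
move=> t ht; apply: sqi_sub; first exact: sqi_W.
by apply: (fit_sqi L K HS HSm HQm); exact: sqi_a0.
Qed.

Lemma ci_u t s q : s \in Sset -> (1 <= t <= T)%N -> ci (u t) s q = 0.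
Proof.
move=> hs ht; rewrite /u ciB //; first last.
- exact: (sqi_SQ P HS HSm HQm (fun s q => m s q t)).
- exact: sqi_W.
rewrite cellW //.
rewrite (_ : ci (fun x => m (S x) (Q x) t) s q = ci (fun _ => m s q t) s q).
  by rewrite ci_cst /m cmeanE // subrr.
apply: eq_Rintegral => x _; rewrite indic_cell.
by case: (eqVneq (S x) s) => [<-|]; case: (eqVneq (Q x) q) => [<-|] //=; rewrite !mul0r.
Qed.

Lemma ci_ubar s q : s \in Sset -> ci ubar s q = 0.
Proof.
move=> hs; rewrite /ubar ciZ; last first.
  apply: sqi_sum_in => t; rewrite mem_index_iota => ht; by apply: sqi_u; lia.
rewrite /ci (eq_Rintegral _ (g := fun x => \sum_(t <- index_iota 1 T.+1) \1_(cell s q) x * u t x)); last first.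
  by move=> x _; rewrite mulr_sumr.
rewrite Rint_sum_in.
  rewrite big_seq big1 ?mulr0 // => t; rewrite mem_index_iota => ht.
  by have := ci_u q hs (_ : (1 <= t <= T)%N); rewrite /ci; apply; lia.
move=> t; rewrite mem_index_iota => ht; apply: sqi_int; apply: sqi_ind.
by apply: sqi_u; lia.
Qed.


Lemma cells_mem (sq : option nat * bool) : sq \in cells Sset -> sq.1 \in Sset.
Proof.
case: sq => s q; rewrite /cells => /allpairsP [[s' q'] [hs' _ /= [-> _]]].
by rewrite -mem_undup.
Qed.

Lemma orth_rho a' dl' et' al' : sqi P a' ->
  ip P T rho (fitval L K S Q a' dl' et' al') = 0.
Proof.
move=> ha.
have -> : fitval L K S Q a' dl' et' al' =
    (fun t x => a' x + kfit L K dl' et' al' t (S x) (Q x)).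
  by apply/funext => t; apply/funext => x; rewrite fitvalE.
rewrite ipD2; first last.
- exact: (Vp_SQ P HS HSm HQm).
- by move=> t _.
- exact: Vp_rho.
have -> : ip P T rho (fun _ x => a' x) = 0.
  rewrite /ip big_nat (eq_bigr (fun t => \int[P]_x ((u t x - ubar x) * a' x))); last first.
    by move=> t ht; apply: eq_Rintegral => x _; rewrite rhoE.
  rewrite -big_nat -Rint_sum_in; last first.
    move=> t; rewrite mem_index_iota => ht; apply: sqi_mulI => //.
    by apply: sqi_sub; [apply: sqi_u; lia | exact: sqi_ubar].
  rewrite (eq_Rintegral _ (g := fun _ => 0)); first by rewrite Rintegral_cst // mul0r.
  move=> x _; rewrite -mulr_suml sumrB sumr_const_nat subn1 /= /ubar.
  rewrite -[_ *+ T]mulr_natl mulrA mulfV ?mul1r ?subrr ?mul0r //.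
  by rewrite pnatr_eq0 -lt0n.
rewrite add0r /ip big_nat big1 // => t ht.
rewrite (eq_Rintegral _ (g := fun x => kfit L K dl' et' al' t (S x) (Q x) * rho t x)); last first.
  by move=> x _; rewrite mulrC.
rewrite (Rint_SQmul HS HSm HQm); last exact: Vp_rho.
rewrite big_seq big1 // => sq hsq.
have hs := cells_mem hsq.
have -> : \int[P]_x (\1_(H2.cell S Q sq.1 sq.2) x * rho t x) = ci (fun x => u t x - ubar x) sq.1 sq.2.
  by apply: eq_Rintegral => x _; rewrite rhoE.
have ht' : (1 <= t <= T)%N by lia.
rewrite ciB; first by rewrite ci_u // ci_ubar // subr0 mulr0.
  exact: sqi_u.
exact: sqi_ubar.
Qed.

End Heart.

End H6.
Import H6.

Module H7.

Lemma fitval_sum (R : realType) (d : measure_display) (Omega : measurableType d)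
  (L K : nat) (S : Omega -> option nat) (Q : Omega -> bool) (I : Type) (r : seq I) (c : I -> R)
  (a0 : Omega -> R) (dl0 : option nat -> nat -> R) (et0 : bool -> nat -> R) (al0 : int -> R)
  (ai : I -> Omega -> R) (dli : I -> option nat -> nat -> R) (eti : I -> bool -> nat -> R)
  (ali : I -> int -> R) t x :
  fitval L K S Q (fun x => a0 x + \sum_(i <- r) c i * ai i x)
    (fun s t => dl0 s t + \sum_(i <- r) c i * dli i s t)
    (fun q t => et0 q t + \sum_(i <- r) c i * eti i q t)
    (fun e => al0 e + \sum_(i <- r) c i * ali i e) t x =
  fitval L K S Q a0 dl0 et0 al0 t x +
  \sum_(i <- r) c i * fitval L K S Q (ai i) (dli i) (eti i) (ali i) t x.
Proof.
rewrite /fitval.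
rewrite [\sum_(e <- Eseq L K) _](eq_bigr (fun e => al0 e * Rind S Q e t x +
   \sum_(i <- r) c i * ali i e * Rind S Q e t x)); last by move=> e _; rewrite mulrDl mulr_suml.
rewrite big_split /= (exchange_big_dep xpredT) //=.
rewrite [\sum_(i <- r) c i * (_ + _)](eq_bigr (fun i => c i * ai i x + c i * dli i (S x) t
   + c i * eti i (Q x) t + \sum_(e <- Eseq L K) c i * (ali i e * Rind S Q e t x))); last first.
  by move=> i _; rewrite !mulrDr mulr_sumr.
rewrite !big_split /=.
have -> : \sum_(i <- r) \sum_(e <- Eseq L K) c i * ali i e * Rind S Q e t x =
          \sum_(i <- r) \sum_(e <- Eseq L K) c i * (ali i e * Rind S Q e t x).
  by apply: eq_bigr => i _; apply: eq_bigr => e _; rewrite mulrA.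
ring.
Qed.

Section Main.
Variables (R : realType) (d : measure_display) (Omega : measurableType d).
Variable (P : probability Omega R).
Variables (T L K : nat) (Sset : seq (option nat)) (S : Omega -> option nat) (Q : Omega -> bool)
  (Y : option nat -> nat -> Omega -> R) (alpha : int -> R) (omega : nat -> nat -> int -> R).
Hypothesis HS : forall x, S x \in Sset.
Hypothesis HSm : forall s, measurable (S @^-1` [set s]).
Hypothesis HQm : measurable (Q @^-1` [set true]).
Hypothesis HYm : forall s t, (s \in Sset \/ s = None) -> measurable_fun setT (Y s t).
Hypothesis HY2 : forall s t, (s \in Sset \/ s = None) -> (1 <= t <= T)%N ->
     P.-integrable setT (fun x => ((Y s t x) ^+ 2)%:E).
Hypothesis Hpos : forall s q, s \in Sset -> (0 < P [set x | S x = s /\ Q x = q])%E.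
Hypothesis HW : forall g t, Some g \in Sset -> (1 <= t <= T)%N ->
     - (L%:Z) <= t%:Z - g%:Z <= K%:Z.
Variables (A : int -> Omega -> R) (D : int -> option nat -> nat -> R) (H : int -> bool -> nat -> R).
Hypothesis HA : forall e, e \in Eseq L K -> fe_proj P T L K S Q (Rind S Q e) (A e) (D e) (H e).
Hypothesis Hunit : gram P T L K S Q A D H \in unitmx.
Hypothesis HNA : forall g t, g \in Gtrg Sset -> (1 <= t < g)%N ->
     {ae P, forall x, Y (Some g) t x = Y None t x}.
Hypothesis HPT : forall g gc t, g \in Gtrg Sset -> gc \in Sset -> grp_gt gc g ->
     (2 <= t <= T)%N -> time_le t gc ->
     Delta P Y S Q t (Some g) true - Delta P Y S Q t (Some g) false =
     Delta P Y S Q t gc true - Delta P Y S Q t gc false.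
Hypothesis Hols : ols_coef P T L K S Q (Yobs Y S Q) alpha.
Hypothesis Homega : forall g l, g \in Gtrg Sset -> (l <= K)%N ->
     ols_coef P T L K S Q (Rgl S Q g l) (omega g l).

Let HT := T_pos HA Hunit.
Let HNone := NoneIn HS HSm HQm HW HA Hunit.

Notation Gt := (Gtrg Sset).
Definition GL := [seq (g, l) | g <- Gt, l <- index_iota 0 K.+1].

Definition Prop_gl (p : nat * nat)
  (th : (Omega -> R) * (option nat -> nat -> R) * (bool -> nat -> R)) : Prop :=
  (p.1 \in Gt) && (p.2 <= K)%N ->
  sqi P th.1.1 /\ Vp P T (resid L K S Q (Rgl S Q p.1 p.2) th.1.1 th.1.2 th.2 (omega p.1 p.2)) /\
  forall a' dl' et' al', sqi P a' ->
    ip P T (resid L K S Q (Rgl S Q p.1 p.2) th.1.1 th.1.2 th.2 (omega p.1 p.2))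
      (fitval L K S Q a' dl' et' al') = 0.

Lemma ex_gl p : exists th, Prop_gl p th.
Proof.
case: (boolP ((p.1 \in Gt) && (p.2 <= K)%N)) => hp; last first.
  by exists (fun _ => 0, fun _ _ => 0, fun _ _ => 0) => h; move: hp; rewrite h.
case/andP: hp => h1 h2.
have hZ : Vp P T (Rgl S Q p.1 p.2) by move=> t _; apply: (sqi_Rgl _ HS HSm HQm).
have [a [dl [et [ha [hr ho]]]]] := ols_orth HS HSm HQm HT hZ (Homega h1 h2).
by exists (a, dl, et) => _; split.
Qed.

Definition thf := projT1 (choice ex_gl).
Lemma thfP p : Prop_gl p (thf p).
Proof. exact: (projT2 (choice ex_gl)). Qed.

Lemma GL_mem p : p \in GL -> (p.1 \in Gt) && (p.2 <= K)%N.
Proof.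
case: p => g l; rewrite /GL => /allpairsP [[g' l'] [hg hl /= [-> ->]]].
rewrite hg /=; move: hl; rewrite mem_index_iota /=. move=> hl. lia.
Qed.

Definition cc (p : nat * nat) := CATT P Y S Q p.1 p.2.
Definition a' x := a0 P T K Sset S Q Y x + \sum_(p <- GL) cc p * (thf p).1.1 x.
Definition dl' s t := dl0 P S Q Y s t + \sum_(p <- GL) cc p * (thf p).1.2 s t.
Definition et' q t := eta0 P S Q Y q t + \sum_(p <- GL) cc p * (thf p).2 q t.
Definition al' e := (fun _ => 0) e + \sum_(p <- GL) cc p * omega p.1 p.2 e.
Definition rp p := resid L K S Q (Rgl S Q p.1 p.2) (thf p).1.1 (thf p).1.2 (thf p).2 (omega p.1 p.2).
Definition r' := resid L K S Q (Yobs Y S Q) a' dl' et' al'.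

Lemma sqi_a' : sqi P a'.
Proof.
apply: sqi_add; first exact: (sqi_a0 K HS HSm HQm HYm HY2 HT HNone).
apply: sqi_sum_in => p hp; apply: sqi_scale.
by have [] := thfP (GL_mem hp).
Qed.

Lemma r'E t x : r' t x = rho P T L K Sset S Q Y t x + \sum_(p <- GL) cc p * rp p t x.
Proof.
have EW : \sum_(g <- Gt) \sum_(0 <= l < K.+1) CATT P Y S Q g l * Rgl S Q g l t x =
          \sum_(p <- GL) cc p * Rgl S Q p.1 p.2 t x by rewrite /GL big_allpairs.
rewrite /r' /resid /a' /dl' /et' /al' fitval_sum.
rewrite (_ : \sum_(p <- GL) _ = \sum_(p <- GL) cc p *
   fitval L K S Q (thf p).1.1 (thf p).1.2 (thf p).2 (omega p.1 p.2) t x); last by [].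
rewrite /rho /resid /W EW /rp /resid.
rewrite [\sum_(p <- GL) cc p * (_ - _)](eq_bigr (fun p => cc p * Rgl S Q p.1 p.2 t x - cc p *
   fitval L K S Q (thf p).1.1 (thf p).1.2 (thf p).2 (omega p.1 p.2) t x)); last first.
  by move=> p _; rewrite mulrBr.
rewrite sumrB; ring.
Qed.

Lemma Vp_rp p : p \in GL -> Vp P T (rp p).
Proof. by move=> hp; have [_ []] := thfP (GL_mem hp). Qed.

Lemma Vp_Yobs : Vp P T (Yobs Y S Q).
Proof. by move=> t ht; apply: (sqi_Yobs HS HSm HQm HYm HY2). Qed.

Lemma Vp_r' : Vp P T r'.
Proof.
move=> t ht; apply: sqi_sub; first exact: Vp_Yobs.
by apply: (fit_sqi L K HS HSm HQm); exact: sqi_a'.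
Qed.

Lemma orth_r' a2 dl2 et2 al2 : sqi P a2 ->
  ip P T r' (fitval L K S Q a2 dl2 et2 al2) = 0.
Proof.
move=> ha.
have hF : Vp P T (fitval L K S Q a2 dl2 et2 al2) by apply: (fit_Vp L K HS HSm HQm).
have -> : r' = (fun t x => rho P T L K Sset S Q Y t x + \sum_(p <- GL) cc p * rp p t x).
  by apply/funext => t; apply/funext => x; rewrite r'E.
have hrho : Vp P T (rho P T L K Sset S Q Y) := Vp_rho L K HS HSm HQm HYm HY2 HT HNone.
have hsum : Vp P T (fun t x => \sum_(p <- GL) cc p * rp p t x).
  by move=> t ht; apply: sqi_sum_in => p hp; apply: sqi_scale; apply: Vp_rp.
rewrite ipC ipD2 // ipC (orth_rho HS HSm HQm HYm HY2 Hpos HW HNA HT HPT HNone) // add0r.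
rewrite ip_sum_in //; last by move=> p hp; apply: Vp_rp.
rewrite big_seq big1 // => p hp; rewrite ipC.
by have [_ [_ ->]] := thfP (GL_mem hp); rewrite ?mulr0.
Qed.

Lemma rd_fit e t x : e \in Eseq L K ->
  rd L K S Q A D H e t x = fitval L K S Q (fun x => - A e x) (fun s t => - D e s t)
    (fun q t => - H e q t) (fun e' => (e' == e)%:R) t x.
Proof.
move=> he; rewrite /rd /Rdm /fitval.
rewrite big1 => [|e' _]; last by rewrite mul0r.
rewrite (eq_bigr (fun e' => Rind S Q e' t x * (e' == e)%:R)); last by move=> e' _; rewrite mulrC.
rewrite sum_delta ?uniq_Eseq //; ring.
Qed.

Lemma alpha_eq e : e \in Eseq L K -> alpha e = al' e.
Proof.
move=> he.
have [a1 [dl1 [et1 [ha1 [Vr1 O1]]]]] := ols_orth HS HSm HQm HT Vp_Yobs Hols.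
pose be e := alpha e + (-1) * al' e.
have hd : sqi P (fun x => a1 x + (-1) * a' x).
  by apply: sqi_add => //; apply: sqi_scale; exact: sqi_a'.
suff : be e = 0 by rewrite /be; lra.
suff key : forall j, j \in Eseq L K -> ip P T (fitval L K S Q (fun x => a1 x + (-1) * a' x)
   (fun g t => dl1 g t + (-1) * dl' g t) (fun q t => et1 q t + (-1) * et' q t) be)
   (rd L K S Q A D H j) = 0.
  exact: (KL HS HSm HQm HT HA Hunit hd key he).
move=> j hj.
have [hAj [Vj _]] := feA HS HSm HQm HT HA hj.
have EF : fitval L K S Q (fun x => a1 x + (-1) * a' x) (fun g t => dl1 g t + (-1) * dl' g t)
    (fun q t => et1 q t + (-1) * et' q t) be =
  (fun t x => r' t x + (-1) * resid L K S Q (Yobs Y S Q) a1 dl1 et1 alpha t x).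
  apply/funext => t; apply/funext => x.
  rewrite (@fitval_lin R d Omega L K S Q a1 dl1 et1 alpha a' dl' et' al' (-1) be t x (fun _ => erefl)) /r' /resid; ring.
rewrite EF ipC ipD2 //; first last.
- by move=> t ht; apply: sqi_scale; apply: Vr1.
- exact: Vp_r'.
rewrite ipZ2 // [ip P T _ r']ipC [ip P T _ (resid _ _ _ _ _ _ _ _ _)]ipC.
have -> : rd L K S Q A D H j = fitval L K S Q (fun x => - A j x) (fun s t => - D j s t)
    (fun q t => - H j q t) (fun e' => (e' == j)%:R).
  by apply/funext => t; apply/funext => x; rewrite rd_fit.
rewrite orth_r'; last exact: sqi_opp.
by rewrite O1 ?mulr0 ?addr0 //; exact: sqi_opp.
Qed.

Lemma main_sec j : j \in Eseq L K ->
  alpha j = \sum_(g <- Gtrg Sset) \sum_(0 <= l < K.+1) omega g l j * CATT P Y S Q g l.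
Proof.
move=> hj; rewrite alpha_eq // /al' add0r /GL big_allpairs.
by apply: eq_bigr => g _; apply: eq_bigr => l _; rewrite mulrC.
Qed.

End Main.

End H7.
Import H7.

Theorem mainTheorem3 (R : realType) (d : measure_display) (Omega : measurableType d)
  (P : probability Omega R) (T L K : nat) (Sset : seq (option nat))
  (S : Omega -> option nat) (Q : Omega -> bool) (Y : option nat -> nat -> Omega -> R)
  (alpha : int -> R) (omega : nat -> nat -> int -> R) :
  (* S is a subset of {2,...,T} u {oo}, and S_i takes values in S *)
  (forall g : nat, Some g \in Sset -> (2 <= g <= T)%N) ->
  (forall x, S x \in Sset) ->
  (* measurability of S_i, Q_i and of the potential outcomes *)
  (forall s, measurable (S @^-1` [set s])) ->
  measurable (Q @^-1` [set true]) ->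
  (forall s t, (s \in Sset \/ s = None) -> measurable_fun setT (Y s t)) ->
  (* finite second moments *)
  (forall s t, (s \in Sset \/ s = None) -> (1 <= t <= T)%N ->
     P.-integrable setT (fun x => ((Y s t x) ^+ 2)%:E)) ->
  (* all cells (s, q) used in the conditional expectations have positive mass *)
  (forall s q, s \in Sset -> (0 < P [set x | S x = s /\ Q x = q])%E) ->
  (* the event-time window E = {-L,...,K} \ {-1} covers all event times *)
  (forall g t, Some g \in Sset -> (1 <= t <= T)%N ->
     - (L%:Z) <= t%:Z - g%:Z <= K%:Z) ->
  (* nonsingular Gram matrix of the three-way demeaned event-time indicators *)
  (exists (A : int -> Omega -> R) (D : int -> option nat -> nat -> R)
          (H : int -> bool -> nat -> R),
     (forall e, e \in Eseq L K -> fe_proj P T L K S Q (Rind S Q e) (A e) (D e) (H e)) /\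
     gram P T L K S Q A D H \in unitmx) ->
  (* no anticipation *)
  (forall g t, g \in Gtrg Sset -> (1 <= t < g)%N ->
     {ae P, forall x, Y (Some g) t x = Y None t x}) ->
  (* DDD-PCT *)
  (forall g gc t, g \in Gtrg Sset -> gc \in Sset -> grp_gt gc g ->
     (2 <= t <= T)%N -> time_le t gc ->
     Delta P Y S Q t (Some g) true - Delta P Y S Q t (Some g) false =
     Delta P Y S Q t gc true - Delta P Y S Q t gc false) ->
  (* alpha: population coefficients of the event-study regression of Y *)
  ols_coef P T L K S Q (Yobs Y S Q) alpha ->
  (* omega^{.,*}_{g,l}: coefficients of the regression of R_{g,l} on the same regressors *)
  (forall g l, g \in Gtrg Sset -> (l <= K)%N ->
     ols_coef P T L K S Q (Rgl S Q g l) (omega g l)) ->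
  forall j, j \in Eseq L K ->
    alpha j = \sum_(g <- Gtrg Sset) \sum_(0 <= l < K.+1) omega g l j * CATT P Y S Q g l.
Proof.
move=> _ HS HSm HQm HYm HY2 Hpos HW [A [D [H [HA Hunit]]]] HNA HPT Hols Homega j hj.
exact: (main_sec HS HSm HQm HYm HY2 Hpos HW HA Hunit HNA HPT Hols Homega hj).
Qed.
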